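(* Setting as in the context. If $M$ and $N$ are $(A,B)$-adjacent, then there is no violation of $(M,N)$.
   Context: Let $K$ be a field and $\mathcal{Q}$ a bipartite quiver (every arrow goes from a source vertex to a sink vertex) with arrows $h_1,\dots,h_r$ and a nonnegative integer $m_\gamma$ attached to each vertex $\gamma$. For each $k$ let $X^{(k)}=[x^{(k)}_{ij}]$ be an $m_{{\rm t}(h_k)}\times m_{{\rm s}(h_k)}$ matrix of distinct independent variables (all variables distinct), in $K[X]$. For a sink $\alpha$, $A_\alpha$ is the horizontal concatenation $[X^{(r_1)}|\cdots|X^{(r_s)}]$ over the arrows $h_{r_1},\dots,h_{r_s}$ ($r_1<\dots<r_s$) with target $\alpha$; for a source $\beta$, $A_\beta$ is the vertical stacking of $X^{(r'_1)},\dots,X^{(r'_t)}$ over the arrows with source $\beta$ ($r'_1<\dots<r'_t$). Fix a lexicographic monomial order $>$ consistent with every $A_\gamma$ (in each $A_\gamma$ the variables strictly decrease from left to right along rows and from top to bottom along columns). Fix an arrow from a source $\gamma_2$ to a sink $\gamma_1$, let $A=A_{\gamma_1}$, $B=A_{\gamma_2}$, let $u,v$ be positive integers, and let $D_u(A)$, $D_v(B)$ be the sets of $u\times u$ minors of $A$ and $v\times v$ minors of $B$. Let $M\in D_u(A)$, $N\in D_v(B)$, $L=\mathrm{lcm}(\mathrm{LM}(M),\mathrm{LM}(N))=x_{p_1}\cdots x_{p_l}$ with $x_{p_1}>\dots>x_{p_l}$, where $p_i=(\alpha_i,\beta_i,r_i)$ means $x_{p_i}=x^{(r_i)}_{\alpha_i\beta_i}$;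 let $S_M=\{i:x_{p_i}\mid\mathrm{LM}(M)\}$, $S_N=\{i:x_{p_i}\mid\mathrm{LM}(N)\}$. A violation of $(M,N)$ is a triple $(p_i,p_j,p_k)$ of distinct indices $i\in S_M$, $j\in S_N$, $k\in S_M\cap S_N$ with $r_i=r_j=r_k$, $\alpha_i\le\alpha_j<\alpha_k$, $\beta_j\le\beta_i<\beta_k$ and $(\alpha_i,\beta_i)\ne(\alpha_j,\beta_j)$. For a minor $P$ let $V_P$ be the set of variables dividing $\mathrm{LM}(P)$ and $d(P,Q)=|(V_P\setminus V_Q)\cup(V_Q\setminus V_P)|$. Let $D^L_u(A)=\{P\in D_u(A):\mathrm{LM}(P)\mid L\}$ and $D^L_v(B)=\{Q\in D_v(B):\mathrm{LM}(Q)\mid L\}$. $M$ and $N$ are $(A,B)$-adjacent if $M\ne N$, there is no $P\in D^L_u(A)$ with $d(P,N)<d(M,N)$, and there is no $Q\in D^L_v(B)$ with $d(M,Q)<d(M,N)$. *)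

(* Defs.v *)
From HB Require Import structures.
From mathcomp Require Import all_boot all_order all_algebra.
From mathcomp Require Import mpoly.
Import GRing.Theory.
Local Open Scope ring_scope.

(* A quiver with vertex set qV, arrows h_0,...,h_{nar-1} (arrow k goes from
   qsrc k to qtgt k) and dimension vector qm. Arrows are indexed from 0. *)
Record quiver := Quiver {
  qV : finType;
  nar : nat;
  qsrc : 'I_nar -> qV;
  qtgt : 'I_nar -> qV;
  qm : qV -> nat }.

Set Implicit Arguments. Unset Strict Implicit. Unset Printing Implicit Defensive.

Section QuiverDefs.
Variable Q : quiver.

(* a bound on all matrix sizes, used only to encode variable indices *)
Definition qmx : nat := \max_(k < nar Q) maxn (qm Q (qtgt Q k)) (qm Q (qsrc Q k)).

Definition valid_entry (k : 'I_(nar Q)) (i j : nat) : bool :=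
  (i < qm Q (qtgt Q k))%N && (j < qm Q (qsrc Q k))%N.

Definition Var : finType :=
  {x : 'I_(nar Q) * 'I_qmx.+1 * 'I_qmx.+1 | valid_entry x.1.1 x.1.2 x.2}.

Definition var_arrow (v : Var) : nat := (val v).1.1.
Definition var_row (v : Var) : nat := (val v).1.2.
Definition var_col (v : Var) : nat := (val v).2.

Definition var_of (k : 'I_(nar Q)) (i j : nat) : option Var :=
  insub (k, inord i, inord j).

Variable K : fieldType.

Notation nvar := #|Var|.
Definition polyR := {mpoly K[nvar]}.
Definition monoR := 'X_{1..nvar}.

(* the polynomial x^(k)_{ij} (0 for invalid triples, never used) *)
Definition X (k : 'I_(nar Q)) (i j : nat) : polyR :=
  if var_of k i j is Some v then 'X_(enum_rank v) else 0.

Definition expo (a : monoR) (v : Var) : nat := a (enum_rank v).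

(* ---- the monomial order ----
   The lexicographic order is determined by a total order on the variables,
   given by an injective weight w : x_v > x_v' iff w v > w v'. *)
Variable w : Var -> nat.

Definition lex_gt (a b : monoR) : bool :=
  [exists v : Var, (expo b v < expo a v)%N &&
     [forall v' : Var, (w v < w v')%N ==> (expo a v' == expo b v')]].

Definition LM (p : polyR) : monoR :=
  foldr (fun a b => if lex_gt a b then a else b) 0%MM (msupp p).

Definition wt (k : 'I_(nar Q)) (i j : nat) : nat :=
  if var_of k i j is Some v then w v else 0.

(* lexicographic order on pairs of naturals (used to order the columns of
   a horizontal concatenation / the rows of a vertical stacking) *)
Definition pair_lt (a b : nat * nat) : bool :=
  (a.1 < b.1)%N || ((a.1 == b.1) && (a.2 < b.2)%N).

(* The order is consistent with A_alpha = [X^(r_1)|...|X^(r_s)] (arrows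
   with target alpha): strictly decreasing along rows (left to right)
   and along columns (top to bottom).  Column of entry x^(k)_{ij} is (k,j). *)
Definition consistent_in (alpha : qV Q) : Prop :=
  (forall (k k' : 'I_(nar Q)) (i j j' : nat),
     qtgt Q k = alpha -> qtgt Q k' = alpha ->
     (i < qm Q alpha)%N -> (j < qm Q (qsrc Q k))%N -> (j' < qm Q (qsrc Q k'))%N ->
     pair_lt (k : nat, j) (k' : nat, j') -> (wt k' i j' < wt k i j)%N) /\
  (forall (k : 'I_(nar Q)) (i i' j : nat),
     qtgt Q k = alpha -> (i < i')%N -> (i' < qm Q alpha)%N ->
     (j < qm Q (qsrc Q k))%N -> (wt k i' j < wt k i j)%N).

(* The order is consistent with A_beta = vertical stacking of X^(r'_1),...
   (arrows with source beta).  Row of entry x^(k)_{ij} is (k,i). *)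
Definition consistent_out (beta : qV Q) : Prop :=
  (forall (k : 'I_(nar Q)) (i j j' : nat),
     qsrc Q k = beta -> (i < qm Q (qtgt Q k))%N -> (j < j')%N ->
     (j' < qm Q beta)%N -> (wt k i j' < wt k i j)%N) /\
  (forall (k k' : 'I_(nar Q)) (i i' j : nat),
     qsrc Q k = beta -> qsrc Q k' = beta ->
     (i < qm Q (qtgt Q k))%N -> (i' < qm Q (qtgt Q k'))%N -> (j < qm Q beta)%N ->
     pair_lt (k : nat, i) (k' : nat, i') -> (wt k' i' j < wt k i j)%N).

Definition consistent_order : Prop :=
  injective w /\ forall gamma, consistent_in gamma /\ consistent_out gamma.

(* ---- minors ----
   P is a u x u minor of A_alpha (alpha a sink): rows f 0 < ... < f (u-1),
   columns (ck b, cj b) strictly increasing in the column order. *)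
Definition sink_minor (alpha : qV Q) (u : nat) (P : polyR) : Prop :=
  exists (f : 'I_u -> 'I_(qm Q alpha)) (ck : 'I_u -> 'I_(nar Q)) (cj : 'I_u -> nat),
    [/\ (forall a a' : 'I_u, (a < a')%N -> (f a < f a')%N),
        (forall b, qtgt Q (ck b) = alpha /\ (cj b < qm Q (qsrc Q (ck b)))%N),
        (forall b b' : 'I_u, (b < b')%N -> pair_lt (ck b : nat, cj b) (ck b' : nat, cj b')) &
        P = \det (\matrix_(a < u, b < u) X (ck b) (f a) (cj b))].

(* P is a u x u minor of A_beta (beta a source): rows (rk a, ri a) strictly
   increasing in the row order, columns g 0 < ... < g (u-1). *)
Definition source_minor (beta : qV Q) (u : nat) (P : polyR) : Prop :=
  exists (rk : 'I_u -> 'I_(nar Q)) (ri : 'I_u -> nat) (g : 'I_u -> 'I_(qm Q beta)),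
    [/\ (forall a, qsrc Q (rk a) = beta /\ (ri a < qm Q (qtgt Q (rk a)))%N),
        (forall a a' : 'I_u, (a < a')%N -> pair_lt (rk a : nat, ri a) (rk a' : nat, ri a')),
        (forall b b' : 'I_u, (b < b')%N -> (g b < g b')%N) &
        P = \det (\matrix_(a < u, b < u) X (rk a) (ri a) (g b))].

Definition VLM (P : polyR) : {set Var} := [set v | (0 < expo (LM P) v)%N].

Definition dist (P R : polyR) : nat := #|(VLM P :\: VLM R) :|: (VLM R :\: VLM P)|.

Definition divides_lcm (P M N : polyR) : Prop :=
  forall v : Var, (expo (LM P) v <= maxn (expo (LM M) v) (expo (LM N) v))%N.

(* (A,B)-adjacency for the arrow k0 : A = A_{tgt k0}, B = A_{src k0} *)
Definition adjacent (k0 : 'I_(nar Q)) (u v : nat) (M N : polyR) : Prop :=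
  [/\ M <> N,
      ~ (exists P, [/\ sink_minor (qtgt Q k0) u P, divides_lcm P M N & (dist P N < dist M N)%N]) &
      ~ (exists R, [/\ source_minor (qsrc Q k0) v R, divides_lcm R M N & (dist M R < dist M N)%N])].

(* a violation of (M,N): variables x_{p_i}, x_{p_j}, x_{p_k} of L (distinct)
   with x_{p_i} | LM(M), x_{p_j} | LM(N), x_{p_k} | LM(M) and LM(N), same
   arrow, alpha_i <= alpha_j < alpha_k, beta_j <= beta_i < beta_k and
   (alpha_i,beta_i) <> (alpha_j,beta_j). *)
Definition violation (M N : polyR) : Prop :=
  exists pi pj pk : Var,
    [/\ [&& pi != pj, pi != pk & pj != pk],
        pi \in VLM M, pj \in VLM N, pk \in VLM M :&: VLM N &
        [/\ var_arrow pi = var_arrow pj, var_arrow pj = var_arrow pk,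
            (var_row pi <= var_row pj < var_row pk)%N,
            (var_col pj <= var_col pi < var_col pk)%N &
            (var_row pi, var_col pi) != (var_row pj, var_col pj)]].

End QuiverDefs.

(* Main.v *)
Require Import Defs.
From HB Require Import structures.
From mathcomp Require Import all_boot all_order all_algebra.
From mathcomp Require Import mpoly.
From mathcomp Require Import fingroup perm.
From mathcomp Require Import zify.
From Stdlib Require Import Classical.
Set Implicit Arguments. Unset Strict Implicit. Unset Printing Implicit Defensive.


Section Core.
Variable T : eqType.

Definition kA (arr cl : T -> nat) (B : nat) (x : T) : nat := arr x * B + cl x.

Definition Ach (arr rw cl : T -> nat) (B n : nat) (p : nat -> T) : Prop :=
  forall a a', a < a' -> a' < n -> rw (p a) < rw (p a') /\ kA arr cl B (p a) < kA arr cl B (p a').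

Definition inS (n : nat) (p : nat -> T) (x : T) : Prop := exists2 a, a < n & p a = x.

Definition GoalP (arr rw cl : T -> nat) (B u v : nat) (mv nv : nat -> T) : Prop :=
  exists pv, [/\ Ach arr rw cl B u pv,
     (forall a, a < u -> (exists2 a', a' < u & pv a = mv a') \/
         (exists2 b, b < v & pv a = nv b /\ exists2 a', a' < u & arr (nv b) = arr (mv a'))),
     (forall x, inS u mv x -> ~ inS u pv x -> ~ inS v nv x) &
     (exists x, [/\ inS u mv x, ~ inS u pv x & ~ inS v nv x])].

Lemma arr_det k x c c1 c2 B : c < B -> c2 < B -> k*B + c1 <= x*B + c -> x*B + c <= k*B + c2 -> x = k.
Proof. nia. Qed.

Lemma Ach_le arr rw cl B n p a a' : Ach arr rw cl B n p -> a <= a' -> a' < n ->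
  rw (p a) <= rw (p a') /\ kA arr cl B (p a) <= kA arr cl B (p a').
Proof.
move=> H; rewrite leq_eqVlt => /orP [/eqP -> //|lt] lt'.
by have [] := H _ _ lt lt'; lia.
Qed.

Lemma Ach_inj arr rw cl B n p a a' : Ach arr rw cl B n p -> a < n -> a' < n -> p a = p a' -> a = a'.
Proof.
move=> H an a'n E; case: (ltngtP a a') => // lt.
- by have [] := H _ _ lt a'n; rewrite E ltnn.
- by have [] := H _ _ lt an; rewrite E ltnn.
Qed.

Lemma Ach_idx arr rw cl B n p a a' : Ach arr rw cl B n p -> a < n -> a' < n ->
  rw (p a) < rw (p a') -> a < a'.
Proof.
move=> H an a'n lt; case: (leqP a' a) => // le.
by have [] := Ach_le H le an; lia.
Qed.

Lemma Ach_idxk arr rw cl B n p a a' : Ach arr rw cl B n p -> a < n -> a' < n ->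
  kA arr cl B (p a) < kA arr cl B (p a') -> a < a'.
Proof.
move=> H an a'n lt; case: (leqP a' a) => // le.
by have [] := Ach_le H le an; lia.
Qed.


Lemma cross arr rw cl B u v mv nv a b : Ach arr rw cl B u mv -> Ach arr cl rw B v nv -> a < u -> b < v ->
 arr (mv a) = arr (nv b) -> rw (mv a) <= rw (nv b) -> cl (nv b) <= cl (mv a) -> mv a <> nv b -> ~ inS v nv (mv a).
Proof.
move=> HM HN au bv Ea r c ne [b' b'v E].
case: (ltngtP b' b) => lt.
- by have [] := HN _ _ lt bv; rewrite E; lia.
- have [] := HN _ _ lt b'v; rewrite E /kA Ea; lia.
- by apply: ne; rewrite -E lt.
Qed.


Lemma Pbranch arr rw cl B u v mv nv s t ak bk pk :
  Ach arr rw cl B u mv -> Ach arr cl rw B v nv ->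
  s < ak -> ak < u -> t < bk -> bk < v -> ak - s = bk - t ->
  mv ak = pk -> nv bk = pk ->
  (forall a, s <= a -> a < ak -> ~ inS v nv (mv a)) ->
  (forall b, t <= b -> b < bk -> ~ inS u mv (nv b)) ->
  (forall b, t <= b -> b < bk -> arr (nv b) = arr pk) ->
  rw (mv s) <= rw (nv t) ->
  (s = 0 \/ kA arr cl B (mv s.-1) < kA arr cl B (nv t)) ->
  GoalP arr rw cl B u v mv nv.
Proof.
move=> HM HN sak aku tbk bkv Elen Emk Enk W1m W1n W4 Hrow Hkey.
pose pv a := if (s <= a) && (a < ak) then nv (a - s + t) else mv a.
have NA : forall b, t <= b -> b < bk ->
   [/\ kA arr cl B (nv b) = arr pk * B + cl (nv b), rw (nv b) < rw pk & cl (nv b) < cl pk].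
  move=> b tb bbk; have [] := HN _ _ bbk bkv; rewrite Enk /kA W4 // => h1 h2; split; lia.
have Nbb : forall b b', t <= b -> b < b' -> b' < bk -> rw (nv b) < rw (nv b') /\ cl (nv b) < cl (nv b').
  move=> b b' tb bb' b'bk; have [] := HN _ _ bb' (ltn_trans b'bk bkv).
  rewrite /kA !W4 //; [lia | lia | lia].
have kpk : kA arr cl B pk = arr pk * B + cl pk by [].
exists pv; split.
- move=> a a' aa' a'u; rewrite /pv.
  case: ifP => Ha; case: ifP => Ha'.
  + have [h1 h2] := Nbb (a - s + t) (a' - s + t) ltac:(lia) ltac:(lia) ltac:(lia).
    have [e1 _ _] := NA (a - s + t) ltac:(lia) ltac:(lia).
    have [e2 _ _] := NA (a' - s + t) ltac:(lia) ltac:(lia).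
    rewrite e1 e2; split; lia.
  + have [e1 r1 c1] := NA (a - s + t) ltac:(lia) ltac:(lia).
    have h1 : ak <= a' by lia.
    have [] := Ach_le HM h1 a'u.
    rewrite Emk e1 kpk => h3 h4; split; lia.
  + have as' : a < s by lia.
    have [r0 _] := HM _ _ as' (ltn_trans sak aku).
    have h1 : a <= s.-1 by lia.
    have h2 : s.-1 < u by lia.
    have [r1 k1] := Ach_le HM h1 h2.
    have [e2 _ _] := NA (a' - s + t) ltac:(lia) ltac:(lia).
    have [e3 _ _] := NA t ltac:(lia) ltac:(lia).
    have Hk : kA arr cl B (mv s.-1) < kA arr cl B (nv t) by case: Hkey => //; lia.
    have [rr cc] : rw (nv t) <= rw (nv (a' - s + t)) /\ cl (nv t) <= cl (nv (a' - s + t)).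
      case: (ltngtP t (a' - s + t)) => h; first by have [] := Nbb _ _ (leqnn t) h ltac:(lia); lia.
        by lia.
      by rewrite -h.
    rewrite e2; rewrite e3 in Hk; split; lia.
  + exact: HM.
- move=> a au; rewrite /pv; case: ifP => Ha.
  + right; exists (a - s + t); first by lia.
    split=> //; exists ak => //; rewrite Emk W4 //; lia.
  + by left; exists a.
- move=> x [a0 a0u <-] Hp Hn.
  case: (boolP ((s <= a0) && (a0 < ak))) => Ha.
  + by apply: (W1m a0) => //; lia.
  + by apply: Hp; exists a0 => //; rewrite /pv (negbTE Ha).
- exists (mv s); split.
  + by exists s => //; lia.
  + move=> [a au]; rewrite /pv; case: ifP => Ha E.
    * by apply: (W1n (a - s + t)); [lia | lia | exists s => //; lia].
    * have := Ach_inj HM au (ltn_trans sak aku) E; lia.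
  + by apply: W1m.
Qed.


Lemma core arr rw cl B (rwB : forall x, rw x < B) (clB : forall x, cl x < B) u v mv nv ai bj ak bk :
 Ach arr rw cl B u mv -> Ach arr cl rw B v nv ->
 ai < u -> bj < v -> ak < u -> bk < v -> mv ak = nv bk ->
 arr (mv ai) = arr (mv ak) -> arr (nv bj) = arr (mv ak) ->
 rw (mv ai) <= rw (nv bj) -> rw (nv bj) < rw (mv ak) ->
 cl (nv bj) <= cl (mv ai) -> cl (mv ai) < cl (mv ak) ->
 mv ai <> nv bj ->
 GoalP arr rw cl B u v mv nv \/ GoalP arr cl rw B v u nv mv.
Proof.
move=> HM HN.
set G := (_ \/ _).
pose Viol ai bj ak bk := (ai < u) /\ (bj < v) /\ (ak < u) /\ (bk < v) /\ (mv ak = nv bk) /\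
  (arr (mv ai) = arr (mv ak)) /\ (arr (nv bj) = arr (mv ak)) /\ (rw (mv ai) <= rw (nv bj)) /\
  (rw (nv bj) < rw (mv ak)) /\ (cl (nv bj) <= cl (mv ai)) /\ (cl (mv ai) < cl (mv ak)) /\ (mv ai <> nv bj).
suff main : forall n ai bj ak bk, ak - ai + (bk - bj) < n -> Viol ai bj ak bk -> G.
  move=> *; apply: (main (ak - ai + (bk - bj)).+1 ai bj ak bk) => //.
clear ai bj ak bk.
elim=> [//|n IH] ai bj ak bk Hn [aiu [bjv [aku [bkv [Ek [Ai [Aj [R1 [R2 [C1 [C2 Ne]]]]]]]]]]].
apply: NNPP => nG.
have IH' : forall ai' bj' ak' bk', ak' - ai' + (bk' - bj') < ak - ai + (bk - bj) ->
    Viol ai' bj' ak' bk' -> False.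
  move=> ai' bj' ak' bk' h1 h2; apply: nG; apply: (IH ai' bj' ak' bk') => //; lia.
have Ek' : nv bk = mv ak by [].
have aik : ai < ak by apply: (Ach_idx HM aiu aku); lia.
have bjk : bj < bk by apply: (Ach_idx HN bjv bkv); rewrite Ek'; lia.
have Aij : arr (mv ai) = arr (nv bj) by rewrite Ai Aj.
have F3m : ~ inS v nv (mv ai) by apply: (cross (b:=bj) HM HN).
have F3n : ~ inS u mv (nv bj) by apply: (cross (b:=ai) HN HM) => //; apply/nesym.
have F1 : forall a, ai < a -> a < ak -> (arr (mv a) = arr (mv ak)) /\ (rw (nv bj) < rw (mv a)) /\
     (cl (mv ai) < cl (mv a)) /\ (rw (mv a) < rw (mv ak)) /\ (cl (mv a) < cl (mv ak)) /\ ~ inS v nv (mv a).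
  move=> a aia aak.
  have au : a < u by lia.
  have [r1 k1] := HM _ _ aia au.
  have [r2 k2] := HM _ _ aak aku.
  have Aa : arr (mv a) = arr (mv ak).
    apply: (arr_det (c1 := cl (mv ai)) (clB (mv a)) (clB (mv ak))); move: k1 k2; rewrite /kA Ai; lia.
  move: k1 k2; rewrite /kA Aa Ai => k1 k2.
  have rr : rw (nv bj) < rw (mv a).
    case: (leqP (rw (mv a)) (rw (nv bj))) => // h; exfalso.
    apply: (IH' a bj ak bk); first by lia.
    rewrite /Viol.
    repeat (split; first solve [done | lia | congruence]).
    by move=> E; move: C1; rewrite -E; lia.
  do 5! (split; first by lia).
  move=> [b bv Eb].
  have bbk : b < bk by apply: (Ach_idx HN bv bkv); rewrite Eb Ek'; lia.
  apply: (IH' ai bj a b); first by lia.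
  rewrite /Viol.
  by repeat (split; first solve [done | lia | congruence]).
have F2 : forall b, bj < b -> b < bk -> (arr (nv b) = arr (mv ak)) /\ (rw (nv bj) < rw (nv b)) /\
     (cl (mv ai) < cl (nv b)) /\ (rw (nv b) < rw (mv ak)) /\ (cl (nv b) < cl (mv ak)) /\ ~ inS u mv (nv b).
  move=> b bjb bbk.
  have bv : b < v by lia.
  have [c1 k1] := HN _ _ bjb bv.
  have [c2 k2] := HN _ _ bbk bkv.
  rewrite Ek' in c2 k2.
  have Ab : arr (nv b) = arr (mv ak).
    apply: (arr_det (c1 := rw (nv bj)) (rwB (nv b)) (rwB (mv ak))); move: k1 k2; rewrite /kA Aj; lia.
  move: k1 k2; rewrite /kA Ab Aj => k1 k2.
  have cc : cl (mv ai) < cl (nv b).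
    case: (leqP (cl (nv b)) (cl (mv ai))) => // h; exfalso.
    apply: (IH' ai b ak bk); first by lia.
    rewrite /Viol.
    repeat (split; first solve [done | lia | congruence]).
    by move=> E; move: R1; rewrite E; lia.
  do 5! (split; first by lia).
  move=> [a au Ea].
  have aak : a < ak by apply: (Ach_idx HM au aku); rewrite Ea; lia.
  apply: (IH' ai bj a b); first by lia.
  rewrite /Viol.
  by rewrite Ea; repeat (split; first solve [done | lia | congruence]).
apply: nG.
have F1n : forall a, ai < a -> a < ak -> ~ inS v nv (mv a).
  by move=> a h1 h2; have [_ [_ [_ [_ [_ H]]]]] := F1 a h1 h2.
have F1a : forall a, ai < a -> a < ak -> arr (mv a) = arr (mv ak).
  by move=> a h1 h2; have [H _] := F1 a h1 h2.
have F2n : forall b, bj < b -> b < bk -> ~ inS u mv (nv b).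
  by move=> b h1 h2; have [_ [_ [_ [_ [_ H]]]]] := F2 b h1 h2.
have F2a : forall b, bj < b -> b < bk -> arr (nv b) = arr (mv ak).
  by move=> b h1 h2; have [H _] := F2 b h1 h2.
case: (ltngtP (ak - ai) (bk - bj)) => Hlen.
- left; set t := bk - (ak - ai).
  have [tb1 tb2] : bj < t /\ t < bk by rewrite /t; lia.
  have [_ [rt [ct _]]] := F2 t tb1 tb2.
  apply: (@Pbranch arr rw cl B u v mv nv ai t ak bk (mv ak) HM HN aik aku tb2 bkv _ erefl Ek' _ _ _ _ _).
  + by rewrite /t; lia.
  + move=> a h1 h2; case: (ltngtP ai a) => h; [exact: F1n | lia | by rewrite -h].
  + move=> b h1 h2; apply: F2n => //; lia.
  + move=> b h1 h2; apply: F2a => //; lia.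
  + lia.
  + case: (posnP ai) => [->|ai0]; [by left | right].
    have [_ k] := HM ai.-1 ai ltac:(lia) aiu.
    move: k; rewrite /kA Ai (F2a t tb1 tb2); lia.
- right; set s := ak - (bk - bj).
  have [sb1 sb2] : ai < s /\ s < ak by rewrite /s; lia.
  have [_ [rs [cs _]]] := F1 s sb1 sb2.
  apply: (@Pbranch arr cl rw B v u nv mv bj s bk ak (mv ak) HN HM bjk bkv sb2 aku _ Ek' erefl _ _ _ _ _).
  + by rewrite /s; lia.
  + move=> b h1 h2; case: (ltngtP bj b) => h; [exact: F2n | lia | by rewrite -h].
  + move=> a h1 h2; apply: F1n => //; lia.
  + move=> a h1 h2; apply: F1a => //; lia.
  + lia.
  + case: (posnP bj) => [->|bj0]; [by left | right].
    have [_ k] := HN bj.-1 bj ltac:(lia) bjv.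
    move: k; rewrite /kA Aj (F1a s sb1 sb2); lia.
- have Win : forall s, s <= ai -> forall t, t <= bj -> ai - s = bj - t ->
     (forall a, s <= a -> a < ak -> ~ inS v nv (mv a) /\ arr (mv a) = arr (mv ak)) ->
     (forall b, t <= b -> b < bk -> ~ inS u mv (nv b) /\ arr (nv b) = arr (mv ak)) ->
     rw (mv s) <= rw (nv t) -> cl (nv t) <= cl (mv s) -> G.
    elim=> [|s IHs] sai t tbj Ed Wm Wn Hr Hc.
    + left; apply: (@Pbranch arr rw cl B u v mv nv 0 t ak bk (mv ak) HM HN _ aku _ bkv _ erefl Ek' _ _ _ Hr (or_introl erefl)).
      * lia.
      * lia.
      * lia.
      * by move=> a h1 h2; have [] := Wm a h1 h2.
      * by move=> a h1 h2; have [] := Wn a h1 h2.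
      * by move=> a h1 h2; have [] := Wn a h1 h2.
    + case: (ltnP (kA arr cl B (mv s)) (kA arr cl B (nv t))) => hk.
      * left; apply: (@Pbranch arr rw cl B u v mv nv s.+1 t ak bk (mv ak) HM HN _ aku _ bkv _ erefl Ek' _ _ _ Hr (or_intror hk)).
        -- lia.
        -- lia.
        -- lia.
        -- by move=> a h1 h2; have [] := Wm a h1 h2.
        -- by move=> a h1 h2; have [] := Wn a h1 h2.
        -- by move=> a h1 h2; have [] := Wn a h1 h2.
      * case: t tbj Ed Wn Hr Hc hk => [|t] tbj Ed Wn Hr Hc hk.
        -- right; apply: (@Pbranch arr cl rw B v u nv mv 0 s.+1 bk ak (mv ak) HN HM _ bkv _ aku _ Ek' erefl _ _ _ Hc (or_introl erefl)).
           ++ lia.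
           ++ lia.
           ++ lia.
           ++ by move=> a h1 h2; have [] := Wn a h1 h2.
           ++ by move=> a h1 h2; have [] := Wm a h1 h2.
           ++ by move=> a h1 h2; have [] := Wm a h1 h2.
        -- case: (ltnP (kA arr rw B (nv t)) (kA arr rw B (mv s.+1))) => hk2.
           ++ right; apply: (@Pbranch arr cl rw B v u nv mv t.+1 s.+1 bk ak (mv ak) HN HM _ bkv _ aku _ Ek' erefl _ _ _ Hc (or_intror hk2)).
              ** lia.
              ** lia.
              ** lia.
              ** by move=> a h1 h2; have [] := Wn a h1 h2.
              ** by move=> a h1 h2; have [] := Wm a h1 h2.
              ** by move=> a h1 h2; have [] := Wm a h1 h2.
           ++ have [ns As1] := Wm s.+1 (leqnn _) ltac:(lia).
              have [nt At1] := Wn t.+1 (leqnn _) ltac:(lia).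
              have [r1 k1] := HM s s.+1 (ltnSn s) ltac:(lia).
              have [c1 k1'] := HN t t.+1 (ltnSn t) ltac:(lia).
              have Ay : arr (mv s) = arr (mv ak).
                apply: (arr_det (c1 := cl (nv t.+1)) (clB (mv s)) (clB (mv s.+1)));
                  move: hk k1; rewrite /kA As1 At1; lia.
              have Az : arr (nv t) = arr (mv ak).
                apply: (arr_det (c1 := rw (mv s.+1)) (rwB (nv t)) (rwB (nv t.+1)));
                  move: hk2 k1'; rewrite /kA As1 At1; lia.
              move: hk hk2 k1 k1'; rewrite /kA Ay Az As1 At1 => hk hk2 k1 k1'.
              have yN : ~ inS v nv (mv s).
                apply: (cross (b:=t) HM HN) => //; try lia.
                by move=> E; move: r1 hk2; rewrite E; lia.
              have zM : ~ inS u mv (nv t).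
                apply: (cross (b:=s) HN HM) => //; try lia.
                by move=> E; move: r1 hk2; rewrite -E; lia.
              apply: (IHs _ t _ _ _ _ _ _).
              ** lia.
              ** lia.
              ** lia.
              ** move=> a h1 h2; case: (ltngtP s a) => h; [exact: Wm | lia | by rewrite -h].
              ** move=> b h1 h2; case: (ltngtP t b) => h; [exact: Wn | lia | by rewrite -h].
              ** lia.
              ** lia.
  apply: (Win ai (leqnn _) bj (leqnn _) _ _ _ R1 C1).
  + by rewrite !subnn.
  + move=> a h1 h2; case: (ltngtP ai a) => h.
    * by split; [exact: F1n | exact: F1a].
    * lia.
    * by rewrite -h.
  + move=> b h1 h2; case: (ltngtP bj b) => h.
    * by split; [exact: F2n | exact: F2a].
    * lia.
    * by rewrite -h.
Qed.

End Core.


Import GRing.Theory.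


Section Alg.
Variables (Q : quiver) (K : fieldType) (w : Var Q -> nat).
Hypothesis winj : injective w.

Local Notation mono := (monoR Q).

Lemma lex_irr (a : mono) : lex_gt w a a = false.
Proof. by apply/negbTE/existsP => [[v /andP [h _]]]; rewrite ltnn in h. Qed.

Lemma lex_asym (a b : mono) : lex_gt w a b -> lex_gt w b a -> False.
Proof.
move=> /existsP [v /andP [h1 /forallP h2]] /existsP [v' /andP [h1' /forallP h2']].
case: (ltngtP (w v) (w v')) => h.
- by move/eqP: (implyP (h2 v') h); lia.
- by move/eqP: (implyP (h2' v) h); lia.
- by have E := winj h; subst v'; lia.
Qed.

Lemma lex_total (a b : mono) : a != b -> lex_gt w a b || lex_gt w b a.
Proof.
move=> ne.
have [v0 Hv0] : exists v, expo a v != expo b v.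
  apply: NNPP => H; move/negP: ne; apply; apply/eqP/mnmP => i.
  rewrite -(enum_valK i); apply/eqP; apply: NNPP => H'; apply: H.
  by exists (enum_val i); apply/negP.
case: (@arg_maxnP _ v0 (fun v => expo a v != expo b v) w Hv0) => v Hv Hmax.
case: (ltngtP (expo a v) (expo b v)) => h.
- apply/orP; right; apply/existsP; exists v; rewrite h /=; apply/forallP => v'.
  apply/implyP => lt; rewrite -[_ == _]negbK; apply/negP => ne'.
  by have := Hmax v'; rewrite eq_sym => /(_ ne'); lia.
- apply/orP; left; apply/existsP; exists v; rewrite h /=; apply/forallP => v'.
  apply/implyP => lt; rewrite -[_ == _]negbK; apply/negP => ne'.
  by have := Hmax v' ne'; lia.
- by rewrite h eqxx in Hv.
Qed.

Lemma lex_gt0 (m : mono) : m != 0%MM -> lex_gt w m 0%MM.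
Proof.
move=> /lex_total /orP [//|/existsP [v /andP [h _]]].
by move: h; rewrite /expo mnm0E.
Qed.

Lemma foldr_in (s : seq mono) :
  foldr (fun a b => if lex_gt w a b then a else b) 0%MM s \in 0%MM :: s.
Proof.
elim: s => [|x s IH] /=; first by rewrite inE.
case: ifP => _; first by rewrite !inE eqxx orbT.
move: IH; rewrite !inE => /orP [->//|->]; by rewrite !orbT.
Qed.

Lemma foldr_max (s : seq mono) m : m \in s -> (forall m', m' \in s -> m' != m -> lex_gt w m m') ->
  foldr (fun a b => if lex_gt w a b then a else b) 0%MM s = m.
Proof.
elim: s => [//|x s IH] Hm Hdom /=.
case: (boolP (m \in s)) => ms.
- rewrite IH //; last by move=> m' m's; apply: Hdom; rewrite inE m's orbT.
  case: ifP => // gt; case: (eqVneq x m) => // xm.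
  by exfalso; apply: (lex_asym gt); apply: Hdom => //; rewrite inE eqxx.
- have xm : x = m by move: Hm; rewrite inE (negbTE ms) orbF => /eqP.
  subst x.
  set r := foldr _ _ _.
  case: (eqVneq r m) => [->|rm]; first by case: ifP.
  case: ifP => // ngt; exfalso; move/negbT/negP: ngt; apply.
  have := foldr_in s; rewrite -/r inE => /orP [/eqP r0|rs].
  + rewrite r0; apply: lex_gt0; apply/eqP => m0; subst m.
    by rewrite r0 eqxx in rm.
  + apply: Hdom; first by rewrite inE rs orbT.
    exact: rm.
Qed.

Lemma LM_eq (p : polyR Q K) m : m \in msupp p ->
  (forall m', m' \in msupp p -> m' != m -> lex_gt w m m') -> LM w p = m.
Proof. by move=> *; rewrite /LM; apply: foldr_max. Qed.

Lemma det_LM n (E : 'I_n -> 'I_n -> Var Q)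
  (HR : forall (a a' b : 'I_n), a < a' -> w (E a' b) < w (E a b))
  (HC : forall (a b b' : 'I_n), b < b' -> w (E a b') < w (E a b)) :
  forall v, expo (LM w (\det (\matrix_(a, b) ('X_(enum_rank (E a b)) : polyR Q K)))%R) v
            = \sum_(a < n) (E a a == v).
Proof.
pose ms (s : {perm 'I_n}) : mono := \big[mnm_add/0%MM]_(a < n) U_(enum_rank (E a (s a)))%MM.
have expo_ms : forall s v, expo (ms s) v = \sum_(a < n) (E a (s a) == v).
  move=> s v; rewrite /expo /ms mnm_sumE; apply: eq_bigr => a _.
  by rewrite mnm1E (inj_eq enum_rank_inj).
set D := determinant _.
have detE : (D = \sum_(s : {perm 'I_n}) (-1) ^+ s * 'X_[ms s])%R.
  rewrite /D /determinant; apply: eq_bigr => s _; congr (_ * _)%R.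
  rewrite /ms (big_morph (@mpolyX _ K) (@mpolyXD _ K) (@mpolyX0 _ K)).
  by apply: eq_bigr => a _; rewrite mxE.
have mcoeffE : forall m, (D@_m = \sum_(s : {perm 'I_n}) (-1) ^+ s * ((ms s == m)%:R : K))%R.
  move=> m; rewrite detE raddf_sum; apply: eq_bigr => s _.
  rewrite !mulr_sign; case: ifP => _; rewrite ?raddfN /= mcoeffX //.
have HRle : forall (a a' b : 'I_n), a <= a' -> w (E a' b) <= w (E a b).
  move=> a a' b; rewrite leq_eqVlt => /orP [/eqP/val_inj ->//|lt].
  exact/ltnW/HR.
have HCle : forall (a b b' : 'I_n), b <= b' -> w (E a b') <= w (E a b).
  move=> a b b'; rewrite leq_eqVlt => /orP [/eqP/val_inj ->//|lt].
  exact/ltnW/HC.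
have lex_dom : forall s : {perm 'I_n}, s != 1%g -> lex_gt w (ms 1%g) (ms s).
  move=> s ns.
  have [a1 Ha1] : exists a, s a != a.
    apply: NNPP => H; move/negP: ns; apply; apply/eqP/permP => a; rewrite perm1.
    by apply/eqP; apply: NNPP => H'; apply: H; exists a; apply/negP.
  case: (@arg_minnP _ a1 (fun a => s a != a) (fun a : 'I_n => nat_of_ord a) Ha1) => a0 Ha0 Hmin.
  have fix0 : forall a : 'I_n, a < a0 -> s a = a.
    move=> a lt; apply/eqP; apply: NNPP => H.
    by have := Hmin a (introN eqP (fun e => H (introT eqP e))); lia.
  have ge0 : forall a : 'I_n, a0 <= a -> a0 <= s a.
    move=> a le; rewrite leqNgt; apply/negP => lt.
    have := fix0 _ lt; move/perm_inj => E'; rewrite E' in lt; lia.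
  have weak : forall a b : 'I_n, a0 <= a -> a0 <= b -> w (E a b) <= w (E a0 a0).
    move=> a b h1 h2; apply: (leq_trans (HRle _ _ b h1)); exact: HCle.
  have strict : forall a b : 'I_n, a0 <= a -> a0 <= b -> (a0 < a) || (a0 < b) -> w (E a b) < w (E a0 a0).
    move=> a b h1 h2 /orP [h|h].
    + exact: (leq_trans (HR _ _ b h) (HCle _ _ _ h2)).
    + exact: (leq_ltn_trans (HRle _ _ b h1) (HC _ _ _ h)).
  have before : forall a : 'I_n, a < a0 -> w (E a0 a0) < w (E a a).
    move=> a h; exact: (ltn_trans (HC _ _ _ h) (HR _ _ a h)).
  apply/existsP; exists (E a0 a0); apply/andP; split.
  - have Z : \sum_(a < n) (E a (s a) == E a0 a0) = 0.
      apply: big1 => a _; apply/eqP; rewrite eqb0; apply/eqP => E'.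
      case: (ltnP a a0) => h.
      + by move: E'; rewrite fix0 // => E'; have := before a h; rewrite E'; lia.
      + have h2 := ge0 a h.
        have : (a0 < a) || (a0 < s a).
          case: (ltngtP a0 a) => // e; [lia | rewrite /=].
          have e' : a0 = a by apply: val_inj.
          subst a; rewrite ltn_neqAle h2 andbT eq_sym; exact: Ha0.
        by move/(strict _ _ h h2); rewrite E'; lia.
    rewrite !expo_ms; apply: (@leq_trans 1); first by rewrite Z.
    by rewrite (bigD1 a0) // perm1 eqxx; apply: leq_addr.
  - apply/forallP => v'; apply/implyP => lt; rewrite !expo_ms; apply/eqP; apply: eq_bigr => a _.
    rewrite perm1; case: (ltnP a a0) => h; first by rewrite fix0.
    have h2 := ge0 a h.
    rewrite (_ : (E a a == v') = false); last by apply/eqP => E'; have := weak a a h h; rewrite E'; lia.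
    rewrite (_ : (E a (s a) == v') = false) //; apply/eqP => E'; have := weak a _ h h2; rewrite E'; lia.
have in1 : ms 1%g \in msupp D.
  rewrite mcoeff_msupp mcoeffE (bigD1 1%g) // big1 ?addr0.
  + by rewrite odd_perm1 eqxx mulr1 expr0 /= addr0 oner_neq0.
  + move=> s ns; case: eqP => [E'|_]; last by rewrite mulr0.
    by have := lex_dom s ns; rewrite E' lex_irr.
move=> v; rewrite (@LM_eq D (ms 1%g)); [|exact: in1|].
  by rewrite expo_ms; apply: eq_bigr => a _; rewrite perm1.
move=> m' Hm' nm'.
have [s Es] : exists s, ms s = m'.
  apply: NNPP => H; move: Hm'; rewrite mcoeff_msupp mcoeffE big1 ?eqxx //.
  move=> s _; case: eqP => [E'|_]; last by rewrite mulr0.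
  by exfalso; apply: H; exists s.
rewrite -Es; apply: lex_dom; apply: contra_neq nm' => s1.
by rewrite -Es s1.
Qed.

End Alg.


Section Glue.
Variables (Q : quiver) (K : fieldType) (w : Var Q -> nat).
Hypothesis Hw : consistent_order w.

Definition Bq := (qmx Q).+1.
Definition arrn (v : Var Q) : nat := var_arrow v.

Lemma rwB (v : Var Q) : var_row v < Bq. Proof. exact: ltn_ord. Qed.
Lemma clB (v : Var Q) : var_col v < Bq. Proof. exact: ltn_ord. Qed.

Lemma qmx_ge k : maxn (qm Q (qtgt Q k)) (qm Q (qsrc Q k)) <= qmx Q.
Proof. exact: (leq_bigmax k). Qed.

Lemma var_of_spec k i j : valid_entry k i j ->
  exists v : Var Q, var_of k i j = Some v /\ [/\ (val v).1.1 = k, var_row v = i & var_col v = j].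
Proof.
move=> Hv; have /andP [hi hj] := Hv.
have := qmx_ge k => hm.
have bi : i < (qmx Q).+1 by lia.
have bj : j < (qmx Q).+1 by lia.
rewrite /var_of; case: insubP => [v _ Ev|nP].
- by exists v; split=> //; rewrite /var_row /var_col Ev /= !inordK.
- by exfalso; move/negP: nP; apply; rewrite /= !inordK.
Qed.

Definition vof (d : Var Q) k i j : Var Q := odflt d (var_of k i j).

Lemma vofP d k i j : valid_entry k i j ->
  [/\ var_of k i j = Some (vof d k i j), (val (vof d k i j)).1.1 = k,
      var_row (vof d k i j) = i & var_col (vof d k i j) = j].
Proof. by move=> /var_of_spec [v [E [h1 h2 h3]]]; rewrite /vof E. Qed.

Lemma vof_self d (v : Var Q) : vof d (val v).1.1 (var_row v) (var_col v) = v.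
Proof.
rewrite /vof /var_of /var_row /var_col !inord_val.
have -> : ((val v).1.1, (val v).1.2, (val v).2) = val v by case: (val v) => [[]].
by rewrite valK.
Qed.

Lemma X_vof d k i j : valid_entry k i j -> X K k i j = 'X_(enum_rank (vof d k i j)).
Proof. by move=> /(vofP d) [E _ _ _]; rewrite /X E. Qed.

Lemma wt_vof d k i j : valid_entry k i j -> wt w k i j = w (vof d k i j).
Proof. by move=> /(vofP d) [E _ _ _]; rewrite /wt E. Qed.

Lemma pair_key k j k' j' B : j < B -> j' < B -> pair_lt (k, j) (k', j') = (k * B + j < k' * B + j').
Proof.
move=> hj hj'; rewrite /pair_lt /=.
case: (ltngtP k k') => h /=; apply/idP/idP => //; try nia.
all: try (subst; lia).
Qed.

Let winj : injective w := Hw.1.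

Lemma sink_LM d al u (f : 'I_u -> 'I_(qm Q al)) (ck : 'I_u -> 'I_(nar Q)) (cj : 'I_u -> nat) :
  (forall a a' : 'I_u, a < a' -> f a < f a') ->
  (forall b, qtgt Q (ck b) = al /\ cj b < qm Q (qsrc Q (ck b))) ->
  (forall b b' : 'I_u, b < b' -> pair_lt (ck b : nat, cj b) (ck b' : nat, cj b')) ->
  forall x, expo (LM w (\det (\matrix_(a < u, b < u) X K (ck b) (f a) (cj b)))%R) x
          = \sum_(a < u) (vof d (ck a) (f a) (cj a) == x).
Proof.
move=> Hf Hc Hck.
have Hval : forall a b, valid_entry (ck b) (f a) (cj b).
  by move=> a b; have [h1 h2] := Hc b; rewrite /valid_entry h1 ltn_ord h2.
have [Hin _] := Hw.2 al.
rewrite (_ : (\matrix_(a, b) _)%R = (\matrix_(a, b) 'X_(enum_rank (vof d (ck b) (f a) (cj b))))%R); last first.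
  by apply/matrixP => a b; rewrite !mxE (X_vof d (Hval a b)).
apply: (@det_LM Q K w winj u (fun a b => vof d (ck b) (f a) (cj b))) => //.
- move=> a a' b lt; rewrite -!(wt_vof d) //.
  have [h1 h2] := Hc b.
  by apply: Hin.2 => //; solve [exact: Hf | exact: ltn_ord | done].
- move=> a b b' lt; rewrite -!(wt_vof d) //.
  have [h1 h2] := Hc b; have [h1' h2'] := Hc b'.
  by apply: Hin.1 => //; solve [exact: Hck | exact: ltn_ord | done].
Qed.

Lemma source_LM d be v (rk : 'I_v -> 'I_(nar Q)) (ri : 'I_v -> nat) (g : 'I_v -> 'I_(qm Q be)) :
  (forall a, qsrc Q (rk a) = be /\ ri a < qm Q (qtgt Q (rk a))) ->
  (forall a a' : 'I_v, a < a' -> pair_lt (rk a : nat, ri a) (rk a' : nat, ri a')) ->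
  (forall b b' : 'I_v, b < b' -> g b < g b') ->
  forall x, expo (LM w (\det (\matrix_(a < v, b < v) X K (rk a) (ri a) (g b)))%R) x
          = \sum_(a < v) (vof d (rk a) (ri a) (g a) == x).
Proof.
move=> Hr Hrk Hg.
have Hval : forall a b, valid_entry (rk a) (ri a) (g b).
  by move=> a b; have [h1 h2] := Hr a; rewrite /valid_entry h2 h1 ltn_ord.
have [_ Hout] := Hw.2 be.
rewrite (_ : (\matrix_(a, b) _)%R = (\matrix_(a, b) 'X_(enum_rank (vof d (rk a) (ri a) (g b))))%R); last first.
  by apply/matrixP => a b; rewrite !mxE (X_vof d (Hval a b)).
apply: (@det_LM Q K w winj v (fun a b => vof d (rk a) (ri a) (g b))) => //.
- move=> a a' b lt; rewrite -!(wt_vof d) //.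
  have [h1 h2] := Hr a; have [h1' h2'] := Hr a'.
  by apply: Hout.2 => //; solve [exact: Hrk | exact: ltn_ord | done].
- move=> a b b' lt; rewrite -!(wt_vof d) //.
  have [h1 h2] := Hr a.
  by apply: Hout.1 => //; solve [exact: Hg | exact: ltn_ord | done].
Qed.

Definition ordx (u : nat) (F : 'I_u -> Var Q) (d : Var Q) (a : nat) : Var Q :=
  match (insub a : option 'I_u) with Some o => F o | None => d end.

Lemma ordxE u F d (o : 'I_u) : ordx F d o = F o.
Proof. by rewrite /ordx valK. Qed.

Lemma sink_chain (d : Var Q) al u (P : polyR Q K) : sink_minor al u P ->
  exists mv : nat -> Var Q, [/\ Ach arrn (@var_row Q) (@var_col Q) Bq u mv,
    (forall x, expo (LM w P) x = \sum_(a < u) (mv a == x)) &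
    (forall a, a < u -> qtgt Q (val (mv a)).1.1 = al)].
Proof.
case=> f [ck [cj [Hf Hc Hck ->]]].
have Hval : forall o, valid_entry (ck o) (f o) (cj o).
  by move=> o; have [h1 h2] := Hc o; rewrite /valid_entry h1 ltn_ord h2.
exists (ordx (fun o => vof d (ck o) (f o) (cj o)) d); split.
- move=> a a' lt a'u; have au : a < u by lia.
  rewrite -[a]/(nat_of_ord (Ordinal au)) -[a']/(nat_of_ord (Ordinal a'u)) !ordxE.
  have [_ e1 r1 c1] := vofP d (Hval (Ordinal au)).
  have [_ e2 r2 c2] := vofP d (Hval (Ordinal a'u)).
  rewrite /kA /arrn /var_arrow e1 e2 r1 r2 c1 c2; split; first exact: Hf.
  have hj : cj (Ordinal au) < Bq by rewrite -c1; exact: clB.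
  have hj' : cj (Ordinal a'u) < Bq by rewrite -c2; exact: clB.
  by have := Hck (Ordinal au) (Ordinal a'u) lt; rewrite (pair_key _ _ hj hj').
- by move=> x; rewrite (sink_LM d Hf Hc Hck); apply: eq_bigr => o _; rewrite ordxE.
- move=> a au; rewrite -[a]/(nat_of_ord (Ordinal au)) ordxE.
  by have [_ -> _ _] := vofP d (Hval (Ordinal au)); have [] := Hc (Ordinal au).
Qed.

Lemma source_chain (d : Var Q) be v (P : polyR Q K) : source_minor be v P ->
  exists nv : nat -> Var Q, [/\ Ach arrn (@var_col Q) (@var_row Q) Bq v nv,
    (forall x, expo (LM w P) x = \sum_(a < v) (nv a == x)) &
    (forall a, a < v -> qsrc Q (val (nv a)).1.1 = be)].
Proof.
case=> rk [ri [g [Hr Hrk Hg ->]]].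
have Hval : forall o, valid_entry (rk o) (ri o) (g o).
  by move=> o; have [h1 h2] := Hr o; rewrite /valid_entry h2 h1 ltn_ord.
exists (ordx (fun o => vof d (rk o) (ri o) (g o)) d); split.
- move=> a a' lt a'u; have au : a < v by lia.
  rewrite -[a]/(nat_of_ord (Ordinal au)) -[a']/(nat_of_ord (Ordinal a'u)) !ordxE.
  have [_ e1 r1 c1] := vofP d (Hval (Ordinal au)).
  have [_ e2 r2 c2] := vofP d (Hval (Ordinal a'u)).
  rewrite /kA /arrn /var_arrow e1 e2 r1 r2 c1 c2; split; first exact: Hg.
  have hj : ri (Ordinal au) < Bq by rewrite -r1; exact: rwB.
  have hj' : ri (Ordinal a'u) < Bq by rewrite -r2; exact: rwB.
  by have := Hrk (Ordinal au) (Ordinal a'u) lt; rewrite (pair_key _ _ hj hj').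
- by move=> x; rewrite (source_LM d Hr Hrk Hg); apply: eq_bigr => o _; rewrite ordxE.
- move=> a au; rewrite -[a]/(nat_of_ord (Ordinal au)) ordxE.
  by have [_ -> _ _] := vofP d (Hval (Ordinal au)); have [] := Hr (Ordinal au).
Qed.

Lemma chain_sink (d : Var Q) al u (pv : nat -> Var Q) :
  Ach arrn (@var_row Q) (@var_col Q) Bq u pv ->
  (forall a, a < u -> qtgt Q (val (pv a)).1.1 = al) ->
  exists P : polyR Q K, sink_minor al u P /\ forall x, expo (LM w P) x = \sum_(a < u) (pv a == x).
Proof.
move=> HA Ht.
have Hr : forall o : 'I_u, var_row (pv o) < qm Q al.
  move=> o; have := valP (pv o); rewrite /= /valid_entry (Ht o (ltn_ord o)).
  by case/andP.
pose f o := Ordinal (Hr o).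
pose ck (o : 'I_u) := (val (pv o)).1.1.
pose cj (o : 'I_u) := var_col (pv o).
have Hf : forall a a' : 'I_u, a < a' -> f a < f a'.
  by move=> a a' lt; have [] := HA _ _ lt (ltn_ord a').
have Hc : forall b, qtgt Q (ck b) = al /\ cj b < qm Q (qsrc Q (ck b)).
  move=> b; split; first exact: Ht b (ltn_ord b).
  by have := valP (pv b); rewrite /= /valid_entry; case/andP.
have Hck : forall b b' : 'I_u, b < b' -> pair_lt (ck b : nat, cj b) (ck b' : nat, cj b').
  move=> b b' lt; have [_ k] := HA _ _ lt (ltn_ord b').
  by rewrite (pair_key _ _ (clB _) (clB _)); exact: k.
exists (\det (\matrix_(a < u, b < u) X K (ck b) (f a) (cj b)))%R; split.
- by exists f, ck, cj; split.
- move=> x; rewrite (sink_LM d Hf Hc Hck); apply: eq_bigr => o _.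
  by have := vof_self d (pv o); rewrite /ck /f /cj /= => ->.
Qed.

Lemma chain_source (d : Var Q) be v (nv : nat -> Var Q) :
  Ach arrn (@var_col Q) (@var_row Q) Bq v nv ->
  (forall a, a < v -> qsrc Q (val (nv a)).1.1 = be) ->
  exists P : polyR Q K, source_minor be v P /\ forall x, expo (LM w P) x = \sum_(a < v) (nv a == x).
Proof.
move=> HA Hs.
have Hg : forall o : 'I_v, var_col (nv o) < qm Q be.
  move=> o; have := valP (nv o); rewrite /= /valid_entry (Hs o (ltn_ord o)).
  by case/andP.
pose g o := Ordinal (Hg o).
pose rk (o : 'I_v) := (val (nv o)).1.1.
pose ri (o : 'I_v) := var_row (nv o).
have Hg' : forall b b' : 'I_v, b < b' -> g b < g b'.
  by move=> a a' lt; have [] := HA _ _ lt (ltn_ord a').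
have Hr : forall a, qsrc Q (rk a) = be /\ ri a < qm Q (qtgt Q (rk a)).
  move=> b; split; first exact: Hs b (ltn_ord b).
  by have := valP (nv b); rewrite /= /valid_entry; case/andP.
have Hrk : forall b b' : 'I_v, b < b' -> pair_lt (rk b : nat, ri b) (rk b' : nat, ri b').
  move=> b b' lt; have [_ k] := HA _ _ lt (ltn_ord b').
  by rewrite (pair_key _ _ (rwB _) (rwB _)); exact: k.
exists (\det (\matrix_(a < v, b < v) X K (rk a) (ri a) (g b)))%R; split.
- by exists rk, ri, g; split.
- move=> x; rewrite (source_LM d Hr Hrk Hg'); apply: eq_bigr => o _.
  by have := vof_self d (nv o); rewrite /rk /g /ri /= => ->.
Qed.

End Glue.


Lemma sum_ex (T : eqType) n (p : nat -> T) x :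
  (forall a a', a < n -> a' < n -> p a = p a' -> a = a') ->
  \sum_(o < n) (p o == x) = [exists o : 'I_n, p o == x].
Proof.
move=> inj; case: existsP => [[o /eqP Ho]|H].
- rewrite (bigD1 o) // Ho eqxx big1 ?addn0 // => o' ne; apply/eqP; rewrite eqb0; apply/eqP => E.
  have h : p o' = p o by rewrite E Ho.
  have := inj o' o (ltn_ord _) (ltn_ord _) h => h'.
  by move/negP: ne; apply; apply/eqP/val_inj.
- apply: big1 => o _; apply/eqP; rewrite eqb0; apply/negP => E; apply: H; by exists o.
Qed.

Lemma card_lt (T : finType) (A B C : {set T}) : C \subset A :|: B ->
  (forall x, x \in A -> x \notin C -> x \notin B) ->
  (exists x, [/\ x \in A, x \notin C & x \notin B]) ->
  #|(C :\: B) :|: (B :\: C)| < #|(A :\: B) :|: (B :\: A)|.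
Proof.
move=> sub H [x [xA xC xB]].
apply: proper_card; apply/properP; split.
- apply/subsetP => y; have h1 := subsetP sub y; have h2 := H y.
  rewrite !inE in h1 *; move: h1 h2.
  by case: (y \in A); case: (y \in B); case: (y \in C) => //= h1 h2;
    first [ by have := h1 isT | by have := h2 isT isT | done ].
- exists x; rewrite !inE; first by rewrite xA xB.
  by rewrite (negbTE xC) (negbTE xB).
Qed.

Lemma inVLM (Q : quiver) (K : fieldType) (w : Var Q -> nat) (P : polyR Q K) n (p : nat -> Var Q) :
  (forall x, expo (LM w P) x = \sum_(o < n) (p o == x)) ->
  (forall a a', a < n -> a' < n -> p a = p a' -> a = a') ->
  forall x, (x \in VLM w P) <-> inS n p x.
Proof.
move=> E inj x; rewrite inE E (sum_ex _ inj) lt0b; split.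
- by move=> /existsP [o /eqP <-]; exists o.
- by move=> [a an <-]; apply/existsP; exists (Ordinal an).
Qed.

Theorem proposition2p24
  (K : fieldType) (Q : quiver)
  (is_sink : pred (qV Q))
  (Hbip : forall k : 'I_(nar Q), ~~ is_sink (qsrc Q k) && is_sink (qtgt Q k))
  (w : Var Q -> nat) (Hw : consistent_order w)
  (k0 : 'I_(nar Q)) (u v : nat) (Hu : (0 < u)%N) (Hv : (0 < v)%N)
  (M N : polyR Q K)
  (HM : sink_minor (qtgt Q k0) u M) (HN : source_minor (qsrc Q k0) v N)
  (Hadj : adjacent w k0 u v M N) :
  ~ violation w M N.
Proof.
move=> [pi [pj [pk [Hd HpiM HpjN HpkMN [Ar1 Ar2 Hrow Hcol Hne]]]]].
have [mv [AM EM TM]] := @sink_chain Q K w Hw pk _ _ _ HM.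
have [nv [AN EN SN]] := @source_chain Q K w Hw pk _ _ _ HN.
have injM : forall a a', a < u -> a' < u -> mv a = mv a' -> a = a'.
  by move=> a a' h1 h2 E; apply: (Ach_inj AM h1 h2 E).
have injN : forall a a', a < v -> a' < v -> nv a = nv a' -> a = a'.
  by move=> a a' h1 h2 E; apply: (Ach_inj AN h1 h2 E).
have iM := inVLM EM injM.
have iN := inVLM EN injN.
have [ai aiu Ei] := (iM pi).1 HpiM.
have [bj bjv Ej] := (iN pj).1 HpjN.
move: HpkMN; rewrite inE => /andP [/(iM pk).1 [ak aku Ek] /(iN pk).1 [bk bkv Ek']].
have Ekk : mv ak = nv bk by rewrite Ek Ek'.
have := @core _ (@arrn Q) (@var_row Q) (@var_col Q) (@Bq Q) (@rwB Q) (@clB Q) u v mv nv ai bj ak bk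
  AM AN aiu bjv aku bkv Ekk.
rewrite /arrn Ei Ej Ek.
move: Hrow Hcol => /andP [R1 R2] /andP [C1 C2].
have Hne' : pi <> pj by case/and3P: Hd => /eqP.
move=> /(_ (etrans Ar1 Ar2) Ar2 R1 R2 C1 C2 Hne').
case => [[pv [AP elP iiP iiiP]] | [rv [AR elR iiR iiiR]]].
- have TP : forall a, a < u -> qtgt Q (val (pv a)).1.1 = qtgt Q k0.
    move=> a au; case: (elP a au) => [[a' a'u ->]|[b bv [-> [a' a'u Ea]]]]; first exact: TM.
    by rewrite -(TM a' a'u); congr (qtgt Q _); apply: val_inj; exact: Ea.
  have [P [HsP EP]] := @chain_sink Q K w Hw pk _ _ pv AP TP.
  have injP : forall a a', a < u -> a' < u -> pv a = pv a' -> a = a'.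
    by move=> a a' h1 h2 E; apply: (Ach_inj AP h1 h2 E).
  have iP := inVLM EP injP.
  case: Hadj => _ HnP _; apply: HnP; exists P; split => //.
  + move=> x; rewrite EP EM EN !sum_ex //.
    case: existsP => [[o /eqP Eo]|]; last by [].
    case: (elP o (ltn_ord o)) => [[a' a'u E]|[b bv [E _]]].
    * have -> : [exists o0 : 'I_u, mv o0 == x] by apply/existsP; exists (Ordinal a'u); rewrite -Eo E.
      exact: leq_maxl.
    * have -> : [exists o0 : 'I_v, nv o0 == x] by apply/existsP; exists (Ordinal bv); rewrite -Eo E.
      exact: leq_maxr.
  + rewrite /dist; apply: card_lt.
    * apply/subsetP => x /(iP x).1 [a au <-]; rewrite inE.
      case: (elP a au) => [[a' a'u ->]|[b bv [-> _]]].
      -- by apply/orP; left; apply/(iM _).2; exists a'.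
      -- by apply/orP; right; apply/(iN _).2; exists b.
    * move=> x /(iM x).1 h1 /negP h2; apply/negP => /(iN x).1.
      by apply: iiP => // /(iP x).2.
    * have [x [h1 h2 h3]] := iiiP; exists x; split.
      -- by apply/(iM x).2.
      -- by apply/negP => /(iP x).1.
      -- by apply/negP => /(iN x).1.
- have TR : forall a, a < v -> qsrc Q (val (rv a)).1.1 = qsrc Q k0.
    move=> a av; case: (elR a av) => [[a' a'v ->]|[b bu [-> [a' a'v Ea]]]]; first exact: SN.
    by rewrite -(SN a' a'v); congr (qsrc Q _); apply: val_inj; exact: Ea.
  have [R [HsR ER]] := @chain_source Q K w Hw pk _ _ rv AR TR.
  have injR : forall a a', a < v -> a' < v -> rv a = rv a' -> a = a'.
    by move=> a a' h1 h2 E; apply: (Ach_inj AR h1 h2 E).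
  have iR := inVLM ER injR.
  case: Hadj => _ _ HnR; apply: HnR; exists R; split => //.
  + move=> x; rewrite ER EM EN !sum_ex //.
    case: existsP => [[o /eqP Eo]|]; last by [].
    case: (elR o (ltn_ord o)) => [[a' a'v E]|[b bu [E _]]].
    * have -> : [exists o0 : 'I_v, nv o0 == x] by apply/existsP; exists (Ordinal a'v); rewrite -Eo E.
      exact: leq_maxr.
    * have -> : [exists o0 : 'I_u, mv o0 == x] by apply/existsP; exists (Ordinal bu); rewrite -Eo E.
      exact: leq_maxl.
  + rewrite /dist (setUC (VLM w M :\: VLM w R)) (setUC (VLM w M :\: VLM w N)); apply: card_lt.
    * apply/subsetP => x /(iR x).1 [a av <-]; rewrite inE.
      case: (elR a av) => [[a' a'v ->]|[b bu [-> _]]].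
      -- by apply/orP; left; apply/(iN _).2; exists a'.
      -- by apply/orP; right; apply/(iM _).2; exists b.
    * move=> x /(iN x).1 h1 /negP h2; apply/negP => /(iM x).1.
      by apply: iiR => // /(iR x).2.
    * have [x [h1 h2 h3]] := iiiR; exists x; split.
      -- by apply/(iN x).2.
      -- by apply/negP => /(iR x).1.
      -- by apply/negP => /(iM x).1.
Qed.
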